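(* The following are equivalent: (i) $\lim_{d\to\infty} n^{X_d}(\varepsilon)=\infty$ for every $\varepsilon\in(0,1)$; (ii) $\lim_{d\to\infty}\bar\lambda^{X_d}_1=0$.
   Context: For each $d\in\mathbb N$, $X_d$ is a random element of a separable Hilbert space $H_d$ with $\mathbb E X_d=0$ and $\mathbb E\|X_d\|_{H_d}^2<\infty$. For a centered Hilbert-space random element $Z$ with finite second moment, $\lambda^Z_1\ge\lambda^Z_2\ge\dots\ge 0$ denote the eigenvalues of its covariance operator $K^Z$ listed with multiplicity (padded with zeros if there are finitely many), $\Lambda^Z=\sum_k\lambda^Z_k=\mathbb E\|Z\|^2$, and $\bar\lambda^Z_k=\lambda^Z_k/\Lambda^Z$. It is assumed that $\lambda^{X_d}_1>0$ for all $d$. The average case approximation complexity is $n^{X_d}(\varepsilon)=\min\{n\in\mathbb N: e^{X_d}(n)\le \varepsilon\, e^{X_d}(0)\}$ for $\varepsilon\in(0,1)$, where $e^{X_d}(0)=(\mathbb E\|X_d\|^2)^{1/2}$ and $e^{X_d}(n)$ is the infimum of $(\mathbb E\|X_d-\sum_{m=1}^n l_m(X_d)\psi_m\|^2)^{1/2}$ over all $\psi_m\in H_d$, $l_m\in H_d^*$; equivalently $n^{X_d}(\varepsilon)=\min\{n\in\mathbb N:\ \sum_{k>n}\bar\lambda^{X_d}_k\le\varepsilon^2\}=\min\{n\in\mathbb N:\sum_{k=1}^n\bar\lambda^{X_d}_k\ge 1-\varepsilon^2\}$. *)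

(* Defs.v *)
From Stdlib Require Import Reals Lra ClassicalEpsilon.
Open Scope R_scope.

Fixpoint psum (f : nat -> R) (n : nat) : R :=
  match n with O => 0 | S m => psum f m + f m end.

(* Eigenvalue data of X_d: lam d k = lambda^{X_d}_{k+1} (0-based index),
   Lam d = Lambda^{X_d} = sum_k lam d k. *)
Definition lambar (lam : nat -> nat -> R) (Lam : nat -> R) (d k : nat) : R :=
  lam d k / Lam d.

Definition cplx_ok (lam : nat -> nat -> R) (Lam : nat -> R) (d : nat) (eps : R) (n : nat) : Prop :=
  psum (lambar lam Lam d) n >= 1 - eps ^ 2.

Definition is_least (P : nat -> Prop) (n : nat) : Prop :=
  P n /\ forall m, P m -> (n <= m)%nat.

Definition nX (lam : nat -> nat -> R) (Lam : nat -> R) (d : nat) (eps : R) : nat :=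
  epsilon (inhabits O) (is_least (cplx_ok lam Lam d eps)).

Definition nat_tends_infty (a : nat -> nat) : Prop :=
  forall M : nat, exists D : nat, forall d, (D <= d)%nat -> (M <= a d)%nat.

(* Main.v *)
Require Import Defs.
From Stdlib Require Import Reals Lra Lia Classical ClassicalEpsilon.
Open Scope R_scope.

Lemma Rdiv_le_0_compat a b : 0 <= a -> 0 < b -> 0 <= a / b.
Proof. intros; unfold Rdiv; apply Rmult_le_pos; auto. left; apply Rinv_0_lt_compat; auto. Qed.

Lemma least_ex (P : nat -> Prop) : (exists n, P n) -> exists n, is_least P n.
Proof.
  intros [n Hn].
  revert Hn. induction n as [n IH] using (well_founded_induction Wf_nat.lt_wf). intros Hn.
  destruct (classic (exists m, (m < n)%nat /\ P m)) as [[m [Hm Pm]]|Hno].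
  - exact (IH m Hm Pm).
  - exists n. split; auto. intros m Pm.
    destruct (Compare_dec.le_lt_dec n m); auto. exfalso; apply Hno; eauto.
Qed.

Lemma nX_spec lam Lam d eps :
  (exists n, cplx_ok lam Lam d eps n) -> is_least (cplx_ok lam Lam d eps) (nX lam Lam d eps).
Proof.
  intros H. unfold nX. apply epsilon_spec. apply least_ex; auto.
Qed.

Lemma psum_sum f n : psum f (S n) = sum_f_R0 f n.
Proof. induction n as [|n IHn]. simpl; ring. change (psum f (S (S n))) with (psum f (S n) + f (S n)). rewrite IHn. simpl. ring. Qed.

Lemma psum_div f c n : psum (fun k => f k / c) n = psum f n / c.
Proof. induction n; simpl. unfold Rdiv; ring. rewrite IHn. unfold Rdiv; ring. Qed.

Lemma psum_nonneg f n : (forall k, 0 <= f k) -> 0 <= psum f n.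
Proof. intros H; induction n; simpl; [lra|]. specialize (H n); lra. Qed.

Lemma psum_bound f n b : (forall k, f k <= b) -> psum f n <= INR n * b.
Proof. intros H; induction n; simpl psum; [simpl; lra|]. rewrite S_INR. specialize (H n); lra. Qed.

Lemma lam_dec (lam : nat -> nat -> R) d k :
  (forall d k, lam d (S k) <= lam d k) -> lam d k <= lam d O.
Proof. intros H; induction k; [lra|]. specialize (H d k); lra. Qed.

Lemma Lam_pos (lam : nat -> nat -> R) (Lam : nat -> R) (d : nat)
  (Hnn : forall d k, 0 <= lam d k)
  (Hsum : forall d, infinite_sum (lam d) (Lam d))
  (Hpos : forall d, 0 < lam d O) : 0 < Lam d.
Proof.
  destruct (Rlt_or_le 0 (Lam d)) as [h|h]; auto. exfalso.
  destruct (Hsum d (lam d O - Lam d)) as [N HN]. specialize (Hpos d); lra.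
  specialize (HN N (Nat.le_refl N)). unfold R_dist in HN.
  rewrite <- psum_sum in HN.
  assert (lam d O <= psum (lam d) (S N)).
  { clear HN. induction N; simpl in *. lra. specialize (Hnn d (S N)). lra. }
  apply Rabs_def2 in HN. lra.
Qed.

Theorem proposition1 (lam : nat -> nat -> R) (Lam : nat -> R)
  (Hnn : forall d k, 0 <= lam d k)
  (Hdec : forall d k, lam d (S k) <= lam d k)
  (Hsum : forall d, infinite_sum (lam d) (Lam d))
  (Hpos : forall d, 0 < lam d O) :
  (forall eps, 0 < eps < 1 -> nat_tends_infty (fun d => nX lam Lam d eps))
  <-> Un_cv (fun d => lambar lam Lam d O) 0.
Proof.
  split.
  - intros H. apply NNPP. intros Hn. unfold Un_cv in Hn.
    apply not_all_ex_not in Hn. destruct Hn as [c Hc].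
    apply imply_to_and in Hc. destruct Hc as [Hc0 Hc].
    set (m := Rmin c 1).
    assert (Hm0 : 0 < m) by (unfold m; apply Rmin_glb_lt; lra).
    assert (Hm1 : m <= 1) by apply Rmin_r.
    assert (Hmc : m <= c) by apply Rmin_l.
    set (eps := sqrt (1 - m / 2)).
    assert (He2 : eps ^ 2 = 1 - m/2).
    { unfold eps. rewrite <- Rsqr_pow2. apply Rsqr_sqrt. lra. }
    assert (Heps : 0 < eps < 1).
    { unfold eps. split. apply sqrt_lt_R0; lra.
      assert (Hs : sqrt (1 - m/2) < sqrt 1) by (apply sqrt_lt_1_alt; split; lra). rewrite sqrt_1 in Hs. exact Hs. }
    destruct (H eps Heps 2%nat) as [D HD].
    apply Hc. exists D. intros d Hd. unfold R_dist. rewrite Rminus_0_r.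
    apply NNPP. intros Hlt. apply Rnot_lt_le in Hlt.
    specialize (HD d Hd). simpl in HD.
    assert (Hok : cplx_ok lam Lam d eps 1).
    { unfold cplx_ok. change (psum (lambar lam Lam d) 1) with (0 + lambar lam Lam d 0). rewrite He2.
      assert (0 <= lambar lam Lam d 0).
      { unfold lambar. apply Rdiv_le_0_compat. apply Hnn.
        apply (Lam_pos lam Lam d Hnn Hsum Hpos). }
      rewrite Rabs_right in Hlt by lra. lra. }
    destruct (nX_spec lam Lam d eps (ex_intro _ 1%nat Hok)) as [_ Hl].
    specialize (Hl 1%nat Hok). lia.
  - intros Hcv eps Heps M.
    set (a := 1 - eps ^ 2).
    assert (Ha : 0 < a).
    { unfold a. assert (eps^2 < 1). { simpl. nra. } lra. }
    assert (HM : 0 < INR M + 1) by (pose proof (pos_INR M); lra).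
    set (dl := a / (INR M + 1)).
    assert (Hdl : 0 < dl) by (unfold dl; apply Rdiv_lt_0_compat; lra).
    destruct (Hcv dl Hdl) as [N HN]. exists N. intros d Hd.
    specialize (HN d Hd). unfold R_dist in HN. rewrite Rminus_0_r in HN.
    apply Rabs_def2 in HN. destruct HN as [HN _].
    pose proof (Lam_pos lam Lam d Hnn Hsum Hpos) as HL.
    assert (Hex : exists n, cplx_ok lam Lam d eps n).
    { destruct (Hsum d (Lam d * eps^2)) as [K HK].
      { apply Rmult_lt_0_compat; auto. simpl. nra. }
      exists (S K). specialize (HK K (Nat.le_refl K)). unfold R_dist in HK.
      rewrite <- psum_sum in HK. apply Rabs_def2 in HK.
      unfold cplx_ok, lambar. rewrite psum_div.
      apply Rle_ge. apply (Rmult_le_reg_r (Lam d)); auto.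
      unfold Rdiv. rewrite Rmult_assoc, Rinv_l by lra. lra. }
    destruct (nX_spec lam Lam d eps Hex) as [Hok _].
    simpl. set (n := nX lam Lam d eps) in *.
    destruct (Compare_dec.le_lt_dec M n) as [|Hlt]; auto. exfalso.
    unfold cplx_ok in Hok.
    assert (Hb : psum (lambar lam Lam d) n <= INR n * lambar lam Lam d O).
    { apply psum_bound. intros k. unfold lambar, Rdiv.
      apply Rmult_le_compat_r. left; apply Rinv_0_lt_compat; auto.
      apply lam_dec; auto. }
    assert (H0 : 0 <= lambar lam Lam d O).
    { unfold lambar. apply Rdiv_le_0_compat; auto. }
    assert (HnM : INR n <= INR M) by (apply le_INR; lia).
    assert (INR n * lambar lam Lam d O <= INR M * dl).
    { apply Rmult_le_compat; auto. apply pos_INR. lra. }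
    assert (INR M * dl < a).
    { unfold dl. apply (Rmult_lt_reg_r (INR M + 1)); auto.
      replace (INR M * (a / (INR M + 1)) * (INR M + 1)) with (INR M * a) by (field; lra). nra. }
    fold a in Hok. lra.
Qed.
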